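(* Let $p$ be a prime with $p \equiv \pm 3 \pmod 8$. Then $2p$ is not $\pi/4$-congruent.
   Context: A positive integer $n$ is called $\pi/4$-congruent if there exist positive rationals $a,b,c$ such that the triangle with sides $a$, $b\sqrt 2$, $c$ has angle $\pi/4$ opposite the side $c$ and area $n$; equivalently $ab = 2n$ and $c^2 = a^2 + 2b^2 - 2ab$. *)

(* Defs.v *)
From mathcomp Require Import all_boot all_order all_algebra.
Set Implicit Arguments. Unset Strict Implicit. Unset Printing Implicit Defensive.
Import Order.TTheory GRing.Theory Num.Theory.
Local Open Scope ring_scope.

(* A positive integer n is pi/4-congruent if there are positive rationals
   a, b, c with a*b = 2n and c^2 = a^2 + 2 b^2 - 2 a b (the triangle with
   sides a, b*sqrt 2, c has angle pi/4 opposite c and area n). *)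
Definition pi4_congruent (n : nat) : Prop :=
  (0 < n)%N /\
  exists a b c : rat, [/\ 0 < a, 0 < b, 0 < c,
    a * b = 2 * n%:R & c ^+ 2 = a ^+ 2 + 2 * b ^+ 2 - 2 * a * b].

(* Main.v *)
Require Import Defs.
From mathcomp Require Import all_boot all_order all_algebra.
From mathcomp Require Import zify ring lra.
Set Implicit Arguments. Unset Strict Implicit. Unset Printing Implicit Defensive.
Import Order.TTheory GRing.Theory Num.Theory.

(* Proof by 2-descent on the cubic 2p m n (n^2+2mn-m^2) = square. *)

Lemma sq_split (a b c : nat) : coprime a b -> a * b = c ^ 2 -> a = (gcdn a c) ^ 2.
Proof.
move=> cab habc; set g := gcdn a c.
apply/eqP; rewrite eqn_dvd; apply/andP; split.
- have -> : g ^ 2 = gcdn (a * g) (c * g) by rewrite -muln_gcdl mulnn.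
  rewrite dvdn_gcd dvdn_mulr //=.
  have -> : c * g = gcdn (c * a) (c * c) by rewrite -muln_gcdr.
  by rewrite dvdn_gcd dvdn_mull //= mulnn -habc dvdn_mulr.
- have cgb : coprime (g ^ 2) b.
    by apply: coprimeXl; apply: coprime_dvdl cab; apply: dvdn_gcdl.
  rewrite -(Gauss_dvdl a cgb) habc; apply: dvdn_exp2r; exact: dvdn_gcdr.
Qed.

Lemma sq_split2 (a b c : nat) : coprime a b -> a * b = c ^ 2 ->
  exists s t, [/\ a = s ^ 2, b = t ^ 2 & c = s * t].
Proof.
move=> cab h; exists (gcdn a c), (gcdn b c).
have ha := sq_split cab h.
have hb : b = gcdn b c ^ 2 by apply: (sq_split (b:=a)); rewrite 1?coprime_sym // mulnC.
split => //; apply/eqP; rewrite -(eqn_exp2r _ _ (isT : 0 < 2)) expnMn -ha -hb h //.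
Qed.

Lemma sq_split_2 (a b c : nat) : coprime a b -> a * b = 2 * c ^ 2 ->
  exists s t, [/\ (a = s ^ 2 /\ b = 2 * t ^ 2) \/ (a = 2 * t ^ 2 /\ b = s ^ 2),
     c = s * t & coprime s t].
Proof.
move=> cab h.
have : 2 %| a * b by rewrite h dvdn_mulr.
rewrite Euclid_dvdM // => /orP [] /dvdnP [a' ha].
- subst a.
  have h' : a' * b = c ^ 2 by apply/eqP; rewrite -(eqn_pmul2l (isT : 0 < 2)) -h; apply/eqP; ring.
  have ca' : coprime a' b by apply: coprime_dvdl cab; apply: dvdn_mulr.
  have [x [y [e1 e2 e3]]] := sq_split2 ca' h'; subst.
  exists y, x; split; first by right; split => //; rewrite mulnC.
    by rewrite mulnC.
  by rewrite coprime_sym -(coprime_pexpl _ _ (isT : 0 < 2)) -(coprime_pexpr _ _ (isT : 0 < 2)).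
- subst b.
  have h' : a * a' = c ^ 2 by apply/eqP; rewrite -(eqn_pmul2l (isT : 0 < 2)) -h; apply/eqP; ring.
  have ca' : coprime a a' by apply: coprime_dvdr cab; apply: dvdn_mulr.
  have [x [y [e1 e2 e3]]] := sq_split2 ca' h'; subst.
  exists x, y; split => //; first by left; split => //; rewrite mulnC.
  by rewrite -(coprime_pexpl _ _ (isT : 0 < 2)) -(coprime_pexpr _ _ (isT : 0 < 2)).
Qed.

Lemma sq3 (X Y Z c : nat) : coprime X Y -> coprime X Z -> coprime Y Z ->
  X * Y * Z = c ^ 2 -> exists x y z, [/\ X = x ^ 2, Y = y ^ 2 & Z = z ^ 2].
Proof.
move=> cXY cXZ cYZ h.
have cX : coprime X (Y * Z) by rewrite coprimeMr cXY cXZ.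
have [x [w [hx hw _]]] := sq_split2 cX (etrans (mulnA _ _ _) h).
have [y [z [hy hz _]]] := sq_split2 cYZ hw.
by exists x, y, z.
Qed.

Lemma place_gen (p M N L a b c M' N' L' k : nat) : 0 < p -> a * b * c = 2 * p ->
  M = a * M' -> N = b * N' -> L = c * L' ->
  coprime M N -> coprime M L -> coprime N L -> 2 * p * M * N * L = k ^ 2 ->
  exists x y z, [/\ M' = x ^ 2, N' = y ^ 2 & L' = z ^ 2].
Proof.
move=> p0 habc hM hN hL cMN cML cNL hk.
have e : k ^ 2 = (2 * p) ^ 2 * (M' * N' * L').
  by rewrite -hk hM hN hL -habc; ring.
have : (2 * p) ^ 2 %| k ^ 2 by rewrite e dvdn_mulr.
rewrite dvdn_pexp2r // => /dvdnP [j hj].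
have hj2 : M' * N' * L' = j ^ 2.
  apply/eqP; rewrite -(eqn_pmul2l (_ : 0 < (2 * p) ^ 2)); last by rewrite expn_gt0 muln_gt0 p0.
  by rewrite -e hj; apply/eqP; ring.
apply: sq3 hj2.
- by apply: (coprime_dvdl (_ : M' %| M)); [rewrite hM dvdn_mull | apply: (coprime_dvdr (_ : N' %| N)) => //; rewrite hN dvdn_mull].
- by apply: (coprime_dvdl (_ : M' %| M)); [rewrite hM dvdn_mull | apply: (coprime_dvdr (_ : L' %| L)) => //; rewrite hL dvdn_mull].
- by apply: (coprime_dvdl (_ : N' %| N)); [rewrite hN dvdn_mull | apply: (coprime_dvdr (_ : L' %| L)) => //; rewrite hL dvdn_mull].
Qed.

Definition dd (p i : nat) : nat := match i with 0 => 1 | 1 => 2 | 2 => p | _ => 2 * p end.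
Definition codes : seq (nat * nat * nat) :=
  [:: (3,0,0); (1,2,0); (1,0,2); (2,1,0); (0,3,0); (0,1,2); (2,0,1); (0,2,1); (0,0,3)].

Lemma cop_common (X Y d : nat) : coprime X Y -> d %| X -> d %| Y -> d = 1.
Proof. by move=> c hX hY; apply/eqP; rewrite -dvdn1 -(eqP c) dvdn_gcd hX hY. Qed.

Lemma place p M N L k : prime p -> odd p -> coprime M N -> coprime M L -> coprime N L ->
  2 * p * M * N * L = k ^ 2 ->
  exists i j l x y z, [/\ M = dd p i * x ^ 2, N = dd p j * y ^ 2, L = dd p l * z ^ 2
                        & (i, j, l) \in codes].
Proof.
move=> pp op cMN cML cNL hk.
have p1 : 1 < p by apply: prime_gt1.
have c2p : coprime 2 p by rewrite coprime2n.
have h2 : 2 %| M * N * L.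
  have : 2 %| k ^ 2 by rewrite -hk -!mulnA dvdn_mulr.
  rewrite Euclid_dvdX // andbT => /dvdnP [k1 ek].
  have e : 2 * (k1 ^ 2 * 2) = 2 * (p * (M * N * L)).
    by subst k; lia.
  move/eqP: e; rewrite eqn_pmul2l // => /eqP e.
  by rewrite -(Gauss_dvdr _ c2p) -e dvdn_mull.
have hp : p %| M * N * L.
  have : p %| k ^ 2 by rewrite -hk -!mulnA dvdn_mull // dvdn_mulr.
  rewrite Euclid_dvdX // andbT => /dvdnP [k1 ek].
  have e : p * (k1 ^ 2 * p) = p * (2 * (M * N * L)).
    by subst k; lia.
  move/eqP: e; rewrite eqn_pmul2l ?prime_gt0 // => /eqP e.
  by rewrite -(Gauss_dvdr _ (_ : coprime p 2)) ?coprimen2 // -e dvdn_mull.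
have decomp : forall X, exists X', X = dd p ((2 %| X) + 2 * (p %| X)) * X'.
  move=> X; case e2: (2 %| X); case ep: (p %| X) => /=.
  - have : 2 * p %| X by rewrite Gauss_dvd // e2 ep.
    by move/dvdnP => [X' ->]; exists X'; rewrite mulnC.
  - by move/dvdnP: e2 => [X' ->]; exists X'; rewrite mulnC.
  - by move/dvdnP: ep => [X' ->]; exists X'; rewrite mulnC.
  - by exists X; rewrite mul1n.
have [M' eM] := decomp M; have [N' eN] := decomp N; have [L' eL] := decomp L.
have key : dd p ((2 %| M) + 2 * (p %| M)) * dd p ((2 %| N) + 2 * (p %| N)) *
           dd p ((2 %| L) + 2 * (p %| L)) = 2 * p /\
           ((2 %| M) + 2 * (p %| M), (2 %| N) + 2 * (p %| N), (2 %| L) + 2 * (p %| L)) \in codes.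
  have x2MN : ~~ ((2 %| M) && (2 %| N)).
    by apply/negP => /andP [a b]; move: (cop_common cMN a b).
  have x2ML : ~~ ((2 %| M) && (2 %| L)).
    by apply/negP => /andP [a b]; move: (cop_common cML a b).
  have x2NL : ~~ ((2 %| N) && (2 %| L)).
    by apply/negP => /andP [a b]; move: (cop_common cNL a b).
  have xpMN : ~~ ((p %| M) && (p %| N)).
    by apply/negP => /andP [a b]; move: (cop_common cMN a b) p1 => ->.
  have xpML : ~~ ((p %| M) && (p %| L)).
    by apply/negP => /andP [a b]; move: (cop_common cML a b) p1 => ->.
  have xpNL : ~~ ((p %| N) && (p %| L)).
    by apply/negP => /andP [a b]; move: (cop_common cNL a b) p1 => ->.
  move: h2 hp x2MN x2ML x2NL xpMN xpML xpNL.
  rewrite !Euclid_dvdM //.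
  case: (2 %| M); case: (2 %| N); case: (2 %| L); case: (p %| M); case: (p %| N); case: (p %| L) => //= *;
    split => //; lia.
case: key => hprod hcodes.
have [x [y [z [ex ey ez]]]] := place_gen (prime_gt0 pp) hprod eM eN eL cMN cML cNL hk.
exists ((2 %| M) + 2 * (p %| M)), ((2 %| N) + 2 * (p %| N)), ((2 %| L) + 2 * (p %| L)), x, y, z.
by split; [rewrite {1}eM ex | rewrite {1}eN ey | rewrite {1}eL ez |].
Qed.

Lemma eqZ (k a b : nat) : 1 < k -> (a%:R = b%:R :> 'Z_k)%R -> a %% k = b %% k.
Proof. by move=> hk h; rewrite -!(val_Zp_nat hk) h. Qed.

Ltac zsolve k heq :=
  apply: (@eqZ k) => //;
  let E := fresh "E" in
  pose proof (congr1 (fun x : nat => (x%:R : 'Z_k)%R) heq) as E;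
  rewrite /= ?(natrD, natrM, natrX, Zp_nat_mod (isT : 1 < k)) in E *;
  apply/eqP; rewrite -subr_eq0; apply/eqP;
  match type of E with ?x = ?y => transitivity (x - y)%R; [ring | by rewrite E subrr] end.

Definition red (i P U : nat) : nat := (dd P i %% 16 * ((U * U) %% 16)) %% 16.

Definition test1 (i j l r P U V W : nat) : bool :=
  if P %% 8 == r then
    let M := red i P U in let N := red j P V in let L := red l P W in
    (odd M + odd N + odd L < 2) || ((L + M * M) %% 16 != (N * N + 2 * M * N) %% 16)
  else true.

Definition in16 := iota 0 16.
Definition in8 := iota 0 8.

Definition chk (i j l r : nat) : bool :=
  all (fun P => all (fun U => all (fun V => all (fun W => test1 i j l r P U V W)
   in16) in16) in16) in16.

Lemma red_ok i p u : red i (p %% 16) (u %% 16) = (dd p i * (u * u)) %% 16.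
Proof.
rewrite /red.
have -> : dd (p %% 16) i %% 16 = dd p i %% 16.
  by case: i => [|[|[|i]]] //=; rewrite ?modn_mod ?modnMmr.
by rewrite modnMml (modnMm u u 16) modnMmr.
Qed.

Lemma kill i j l r p M N L u v w : chk i j l r -> p %% 8 = r ->
  M = dd p i * u ^ 2 -> N = dd p j * v ^ 2 -> L = dd p l * w ^ 2 ->
  2 <= odd M + odd N + odd L -> L + M ^ 2 = N ^ 2 + 2 * M * N -> False.
Proof.
move=> /allP /(_ (p %% 16)) H hp eM eN eL hodd heq.
have m16 : forall x, x %% 16 \in in16 by move=> x; rewrite mem_iota ltn_mod.
move: (H (m16 p)) => /allP /(_ _ (m16 u)) /allP /(_ _ (m16 v)) /allP /(_ _ (m16 w)).
have e : (p %% 16 %% 8 == r) = true by rewrite modn_dvdm //; apply/eqP.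
rewrite /test1 e !red_ok !odd_mod // !mulnn -eM -eN -eL.
rewrite ltnNge hodd /= => /negP; apply; apply/eqP.
zsolve 16 heq.
Qed.


Lemma chk_102_3 : chk 1 0 2 3. Proof. by vm_compute. Qed.
Lemma chk_102_5 : chk 1 0 2 5. Proof. by vm_compute. Qed.
Lemma chk_210_3 : chk 2 1 0 3. Proof. by vm_compute. Qed.
Lemma chk_210_5 : chk 2 1 0 5. Proof. by vm_compute. Qed.
Lemma chk_030_3 : chk 0 3 0 3. Proof. by vm_compute. Qed.
Lemma chk_030_5 : chk 0 3 0 5. Proof. by vm_compute. Qed.
Lemma chk_012_3 : chk 0 1 2 3. Proof. by vm_compute. Qed.
Lemma chk_012_5 : chk 0 1 2 5. Proof. by vm_compute. Qed.
Lemma chk_003_3 : chk 0 0 3 3. Proof. by vm_compute. Qed.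
Lemma chk_003_5 : chk 0 0 3 5. Proof. by vm_compute. Qed.

Definition chkS2 (r : nat) : bool :=
  all (fun P => all (fun V => all (fun G => all (fun H =>
    if (P == r) && odd V && odd H then
      (P * V * V + 2 * G * G * H * H) %% 8 != (H * H * H * H + 2 * G * G * G * G) %% 8
    else true) in8) in8) in8) in8.

Lemma m8 x : x %% 8 \in in8. Proof. by rewrite mem_iota ltn_mod. Qed.

Lemma killS2 r p v g h : chkS2 r -> p %% 8 = r -> odd v -> odd h ->
  p * v ^ 2 + 2 * g ^ 2 * h ^ 2 = h ^ 4 + 2 * g ^ 4 -> False.
Proof.
move=> /allP /(_ (p %% 8)) H hp ov oh heq.
move: (H (m8 p)) => /allP /(_ _ (m8 v)) /allP /(_ _ (m8 g)) /allP /(_ _ (m8 h)).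
have e : (p %% 8 == r) = true by apply/eqP.
rewrite e !odd_mod // ov oh /= => /negP; apply; apply/eqP.
zsolve 8 heq.
Qed.

Definition chkS5 (r : nat) : bool :=
  all (fun P => all (fun U => all (fun S => all (fun T =>
    if (P == r) && odd U && odd S then
      ((P * U * U + 4 * S * T) %% 8 != (S * S + 2 * T * T) %% 8) &&
      ((P * U * U) %% 8 != (S * S + 2 * T * T + 4 * S * T) %% 8)
    else true) in8) in8) in8) in8.

Lemma killS5 r p u s t : chkS5 r -> p %% 8 = r -> odd u -> odd s ->
  (p * u ^ 2 + 4 * s * t = s ^ 2 + 2 * t ^ 2 \/ p * u ^ 2 = s ^ 2 + 2 * t ^ 2 + 4 * s * t) ->
  False.
Proof.
move=> /allP /(_ (p %% 8)) H hp ou os heq.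
move: (H (m8 p)) => /allP /(_ _ (m8 u)) /allP /(_ _ (m8 s)) /allP /(_ _ (m8 t)).
have e : (p %% 8 == r) = true by apply/eqP.
rewrite e !odd_mod // ou os /= => /andP [h1 h2].
case: heq => heq.
- by move/negP: h1; apply; apply/eqP; zsolve 8 heq.
- by move/negP: h2; apply; apply/eqP; zsolve 8 heq.
Qed.

Definition chkS7 (r : nat) : bool :=
  all (fun P => all (fun U => all (fun V => all (fun S => all (fun T =>
    if (P == r) && odd U && odd V && odd S then
      ((P * V * V) %% 8 != (S * S + 2 * T * T) %% 8) ||
      (((U * U + 4 * S * T) %% 8 != (S * S + 2 * T * T) %% 8) &&
       ((U * U) %% 8 != (S * S + 2 * T * T + 4 * S * T) %% 8))
    else true) in8) in8) in8) in8) in8.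

Lemma killS7 r p u v s t : chkS7 r -> p %% 8 = r -> odd u -> odd v -> odd s ->
  p * v ^ 2 = s ^ 2 + 2 * t ^ 2 ->
  (u ^ 2 + 4 * s * t = s ^ 2 + 2 * t ^ 2 \/ u ^ 2 = s ^ 2 + 2 * t ^ 2 + 4 * s * t) ->
  False.
Proof.
move=> /allP /(_ (p %% 8)) H hp ou ov os hn heq.
move: (H (m8 p)) => /allP /(_ _ (m8 u)) /allP /(_ _ (m8 v)) /allP /(_ _ (m8 s)) /allP /(_ _ (m8 t)).
have e : (p %% 8 == r) = true by apply/eqP.
rewrite e !odd_mod // ou ov os /= => /orP [h0 | /andP [h1 h2]].
- by move/negP: h0; apply; apply/eqP; zsolve 8 hn.
case: heq => heq.
- by move/negP: h1; apply; apply/eqP; zsolve 8 heq.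
- by move/negP: h2; apply; apply/eqP; zsolve 8 heq.
Qed.

Lemma chkS2_3 : chkS2 3. Proof. by vm_compute. Qed.
Lemma chkS2_5 : chkS2 5. Proof. by vm_compute. Qed.
Lemma chkS5_3 : chkS5 3. Proof. by vm_compute. Qed.
Lemma chkS5_5 : chkS5 5. Proof. by vm_compute. Qed.
Lemma chkS7_3 : chkS7 3. Proof. by vm_compute. Qed.
Lemma chkS7_5 : chkS7 5. Proof. by vm_compute. Qed.

Lemma oddE x : odd x -> exists a, x = 2 * a + 1.
Proof. by move=> h; exists x./2; rewrite -{1}(odd_double_half x) h -muln2; lia. Qed.

Lemma evenE x : ~~ odd x -> exists a, x = 2 * a.
Proof. by move/negbTE=> h; exists x./2; rewrite -{1}(odd_double_half x) h -muln2; lia. Qed.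

Lemma odd_sq x : odd (x ^ 2) = odd x.
Proof. by rewrite oddX. Qed.

Lemma even_of_sq2 x y : x ^ 2 = 2 * y -> exists a, x = 2 * a.
Proof.
move=> h; apply: evenE; rewrite -odd_sq h oddM //.
Qed.

Lemma K1 (M N w c : nat) : coprime M N -> odd N -> M = 2 * c -> 0 < c ->
  w ^ 2 + M ^ 2 = N ^ 2 + 2 * M * N ->
  exists s t, [/\ N + M = s ^ 2 + 2 * t ^ 2, c = s * t, coprime s t & odd s].
Proof.
move=> cMN oN eM c0 heq.
have hZ : (N + M) ^ 2 = w ^ 2 + 2 * M ^ 2 by lia.
have oZ : odd (N + M) by rewrite oddD oN eM oddM.
have ow : odd w.
  by move: (congr1 odd hZ); rewrite oddD !odd_sq oZ eM oddM /= addbF.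
have wZ : w < N + M.
  rewrite -(ltn_exp2r _ _ (isT : 0 < 2)) hZ.
  have : 0 < M ^ 2 by rewrite expn_gt0 eM muln_gt0 c0.
  lia.
have [A eA] : exists A, N + M = w + 2 * A.
  have : ~~ odd (N + M - w) by rewrite oddB ?(ltnW wZ) // oZ ow.
  by move/evenE => [A hA]; exists A; lia.
have hAB : A * (A + w) = 2 * c ^ 2.
  by move: hZ; rewrite eA eM; lia.
have cZw : coprime (N + M) w.
  have cMZ : coprime (M ^ 2) (N + M) by rewrite coprime_pexpl // /coprime gcdnDr.
  apply/eqP; apply: (cop_common cMZ); last exact: dvdn_gcdl.
  have d2 : coprime (gcdn (N + M) w) 2.
    by rewrite coprimen2; apply: (dvdn_odd (dvdn_gcdl _ _) oZ).
  rewrite -(Gauss_dvdr _ d2).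
  have h1 : gcdn (N + M) w %| (N + M) ^ 2 by apply: dvdn_exp => //; exact: dvdn_gcdl.
  have h2 : gcdn (N + M) w %| w ^ 2 by apply: dvdn_exp => //; exact: dvdn_gcdr.
  by move: h1; rewrite hZ dvdn_addr.
have cAB : coprime A (A + w).
  apply/eqP; apply: (cop_common cZw).
  - rewrite eA dvdn_add // ?dvdn_mull ?dvdn_gcdl //.
    by rewrite -(dvdn_addr _ (dvdn_gcdl _ _)) dvdn_gcdr.
  - by rewrite -(dvdn_addr _ (dvdn_gcdl _ _)) dvdn_gcdr.
have [s [t [hst ec cst]]] := sq_split_2 cAB hAB.
have eZ : N + M = s ^ 2 + 2 * t ^ 2 by case: hst => [[h1 h2] | [h1 h2]]; lia.
exists s, t; split => //.
by move: oZ; rewrite eZ oddD odd_sq oddM /= addbF.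
Qed.


Lemma K2 (m n w : nat) : odd m -> odd n -> coprime n w ->
  2 * w ^ 2 + m ^ 2 = n ^ 2 + 2 * m * n ->
  exists s t, [/\ n = s ^ 2 + 2 * t ^ 2, odd s & (m + 4 * s * t = n \/ m = n + 4 * s * t)].
Proof.
move=> om on cnw heq.
have ow : odd w.
  apply/negP => /negP /evenE [c ec].
  have [a ea] := oddE om; have [b eb] := oddE on.
  by move: heq; rewrite ec ea eb; lia.
have [D hD] : exists D, n = m + D \/ m = n + D.
  case: (leqP m n) => h; first by exists (n - m); left; lia.
  by exists (m - n); right; lia.
have hD2 : D ^ 2 + 2 * w ^ 2 = 2 * n ^ 2 by case: hD => e; move: heq; rewrite e; lia.
have wn : w <= n by rewrite -leq_sqr; lia.
have [A eA] : exists A, n = w + 2 * A.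
  have : ~~ odd (n - w) by rewrite oddB // on ow.
  by move/evenE => [A hA]; exists A; lia.
have hD3 : D ^ 2 = 2 * (4 * (A * (A + w))) by move: hD2; rewrite eA; lia.
have [D1 eD1] := even_of_sq2 hD3.
have hD4 : D1 ^ 2 = 2 * (A * (A + w)) by move: hD3; rewrite eD1; lia.
have [y ey] := even_of_sq2 hD4.
have hAB : A * (A + w) = 2 * y ^ 2 by move: hD4; rewrite ey; lia.
have cAB : coprime A (A + w).
  apply/eqP; apply: (cop_common cnw).
  - rewrite eA dvdn_add // ?dvdn_mull ?dvdn_gcdl //.
    by rewrite -(dvdn_addr _ (dvdn_gcdl _ _)) dvdn_gcdr.
  - by rewrite -(dvdn_addr _ (dvdn_gcdl _ _)) dvdn_gcdr.
have [s [t [hst ec cst]]] := sq_split_2 cAB hAB.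
have en : n = s ^ 2 + 2 * t ^ 2 by case: hst => [[h1 h2] | [h1 h2]]; clear -eA h1 h2; lia.
exists s, t; split => //.
- by move: on; rewrite en oddD odd_sq oddM /= addbF.
- by case: hD => e; [left | right]; clear -e eD1 ey ec; lia.
Qed.

Section RingPart.
Local Open Scope ring_scope.

Definition cub (p : nat) (m n : int) : Prop :=
  exists k : int, (2 * p%:Z * m * n * (n ^+ 2 + 2 * m * n - m ^+ 2) = k ^+ 2)%R.

Lemma cub_nat p M N : (0 < p)%N -> (0 < M)%N -> (0 < N)%N -> cub p M%:Z N%:Z ->
  exists L k : nat, (L + M ^ 2 = N ^ 2 + 2 * M * N /\ 2 * p * M * N * L = k ^ 2)%N.
Proof.
move=> p0 M0 N0 [k hk].
set K : int := (N%:Z ^+ 2 + 2 * M%:Z * N%:Z - M%:Z ^+ 2)%R in hk.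
have Kge : (0 <= K)%R.
  have h1 : (0 < 2 * p%:Z * M%:Z * N%:Z)%R by rewrite !mulr_gt0 //; lia.
  have h2 : (0 <= k ^+ 2)%R by rewrite sqr_ge0.
  rewrite -hk in h2.
  by rewrite -(pmulr_rge0 _ h1).
exists `|K|%N, `|k|%N; split.
- by rewrite /K in Kge *; lia.
- have e1 : ((`|k|%N)%:Z ^+ 2 = k ^+ 2)%R by rewrite abszE real_normK // num_real.
  have e2 : (`|K|%N)%:Z = K by rewrite abszE ger0_norm.
  apply/eqP; rewrite -eqz_nat; apply/eqP.
  by rewrite !PoszM -expr2 e1 e2 -hk.
Qed.

Lemma cub_scale p g M0 N0 : (0 < g)%N -> cub p (g * M0)%N%:Z (g * N0)%N%:Z -> cub p M0%:Z N0%:Z.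
Proof.
move=> g0 [k hk].
set X0 : int := (2 * p%:Z * M0%:Z * N0%:Z * (N0%:Z ^+ 2 + 2 * M0%:Z * N0%:Z - M0%:Z ^+ 2)).
have e : k ^+ 2 = ((g ^ 2)%N%:Z) ^+ 2 * X0.
  by rewrite -hk /X0 !PoszM; ring.
have gpos : 0 < ((g ^ 2)%N%:Z) ^+ 2 by rewrite exprn_gt0 // ltz_nat expn_gt0 g0.
have X0ge : 0 <= X0.
  by rewrite -(pmulr_rge0 _ gpos) -e sqr_ge0.
have en : ((g ^ 2) ^ 2 * `|X0| = `|k| ^ 2)%N.
  apply/eqP; rewrite -eqz_nat !PoszM -!expr2 abszE ger0_norm // abszE real_normK ?num_real //.
  by rewrite e PoszM -expr2.
have : ((g ^ 2) ^ 2 %| `|k| ^ 2)%N by rewrite -en dvdn_mulr.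
rewrite dvdn_pexp2r // => /dvdnP [k0 ek].
exists k0%:Z.
have : ((g ^ 2) ^ 2 * `|X0| = (g ^ 2) ^ 2 * k0 ^ 2)%N by rewrite en ek; ring.
move/eqP; rewrite eqn_pmul2l ?expn_gt0 ?g0 // => /eqP hX.
by rewrite -/X0 -[X0]ger0_norm // -abszE hX PoszM -expr2.
Qed.

Lemma oddcount M N L : coprime M N -> coprime M L -> coprime N L ->
  (2 <= odd M + odd N + odd L)%N.
Proof.
move=> cMN cML cNL.
case oM: (odd M); case oN: (odd N); case oL: (odd L) => //=; exfalso.
- by move: (@cop_common N L 2 cNL); rewrite !dvdn2 oN oL => /(_ isT isT).
- by move: (@cop_common M L 2 cML); rewrite !dvdn2 oM oL => /(_ isT isT).
- by move: (@cop_common M N 2 cMN); rewrite !dvdn2 oM oN => /(_ isT isT).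
- by move: (@cop_common M N 2 cMN); rewrite !dvdn2 oM oN => /(_ isT isT).
Qed.

Lemma odd_of_cop M N : (2 %| M)%N -> coprime M N -> odd N.
Proof.
move=> h2 c; apply/negPn/negP; rewrite -dvdn2 => h.
by move: (cop_common c h2 h).
Qed.

Lemma S1_step p x y s t : (0 < t)%N -> (y ^ 2 + 2 * s * t = s ^ 2 + 2 * t ^ 2)%N ->
  (p * x ^ 2 = s * t)%N ->
  0 < y%:Z + t%:Z - s%:Z /\ cub p (y%:Z + t%:Z - s%:Z) t%:Z.
Proof.
move=> t0 hv hst.
have hv' : (y%:Z) ^+ 2 + 2 * s%:Z * t%:Z = s%:Z ^+ 2 + 2 * t%:Z ^+ 2 by lia.
have hst' : s%:Z * t%:Z = p%:Z * x%:Z ^+ 2 by lia.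
split.
  rewrite ltNge; apply/negP => hle.
  have t0' : 0 < t%:Z by lia.
  have y0 : 0 <= y%:Z by lia.
  nia.
set m' := y%:Z + t%:Z - s%:Z.
exists (2 * p%:Z * m' * x%:Z).
have K' : t%:Z ^+ 2 + 2 * m' * t%:Z - m' ^+ 2 = 2 * m' * s%:Z by rewrite /m'; lia.
rewrite K'.
have -> : 2 * p%:Z * m' * t%:Z * (2 * m' * s%:Z) = 4 * p%:Z * m' ^+ 2 * (s%:Z * t%:Z) by ring.
rewrite hst'; ring.
Qed.

Lemma pos_case p B : prime p -> (p %% 8 = 3 \/ p %% 8 = 5)%N ->
  (forall m n : int, (`|m| + `|n| < B)%N -> m != 0 -> 0 < n -> ~ cub p m n) ->
  forall M N : nat, (M + N <= B)%N -> (0 < M)%N -> (0 < N)%N -> ~ cub p M%:Z N%:Z.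
Proof.
move=> pp hp8 IH M N hB M0 N0 hc.
have p0 : (0 < p)%N := prime_gt0 pp.
have op : odd p.
  by case: hp8 => h; rewrite -(odd_mod _ (erefl false : odd 8 = false)) h.
case: (eqVneq (gcdn M N) 1) => hg; last first.
  set g := gcdn M N in hg.
  have g0 : (0 < g)%N by rewrite gcdn_gt0 M0.
  have g2 : (1 < g)%N by move/eqP: hg; lia.
  have eM : M = (g * (M %/ g))%N by rewrite mulnC divnK // dvdn_gcdl.
  have eN : N = (g * (N %/ g))%N by rewrite mulnC divnK // dvdn_gcdr.
  have hc' : cub p (M %/ g)%N%:Z (N %/ g)%N%:Z by apply: (cub_scale g0); rewrite -eM -eN.
  move: (M %/ g)%N (N %/ g)%N eM eN hc' => a b ea eb hc'.
  have a0 : (0 < a)%N by move: M0; rewrite ea muln_gt0 => /andP [].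
  have b0 : (0 < b)%N by move: N0; rewrite eb muln_gt0 => /andP [].
  have hB' : (`|a%:Z| + `|b%:Z| < B)%N by rewrite /=; rewrite ea eb in hB; nia.
  have ha : a%:Z != 0 by apply/eqP; lia.
  have hb : 0 < b%:Z by rewrite ltz_nat.
  by apply: (IH a%:Z b%:Z hB' ha hb hc').
have cMN : coprime M N by rewrite /coprime hg.
have [L [k [heq hk]]] := cub_nat p0 M0 N0 hc.
have cML : coprime M L.
  apply/eqP; apply: (cop_common (coprimeXr 2 cMN)); first exact: dvdn_gcdl.
  have h1 : (gcdn M L %| L + M ^ 2)%N.
    by rewrite dvdn_add ?dvdn_gcdr // dvdn_exp // dvdn_gcdl.
  move: h1; rewrite heq dvdn_addl //.
  by rewrite -mulnA dvdn_mull // dvdn_mulr // dvdn_gcdl.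
have cNL : coprime N L.
  have cNM : coprime N M by rewrite coprime_sym.
  apply/eqP; apply: (cop_common (coprimeXr 2 cNM)); first exact: dvdn_gcdl.
  have h1 : (gcdn N L %| N ^ 2 + 2 * M * N)%N.
    by rewrite dvdn_add ?dvdn_mull ?dvdn_gcdl // dvdn_exp // dvdn_gcdl.
  by move: h1; rewrite -heq dvdn_addr // dvdn_gcdr.
have [i [j [l [x [y [z [eM eN eL hcod]]]]]]] := place pp op cMN cML cNL hk.
have ocnt := oddcount cMN cML cNL.
move: eM eN eL; move: hcod; rewrite !inE.
case/orP => [/eqP [-> -> ->] eM eN eL|].
  (* S1 : M = 2p x^2, N = y^2, L = z^2 *)
  have oN : odd N by apply: (odd_of_cop _ cMN); rewrite eM /= -mulnA dvdn_mulr.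
  have c0 : (0 < p * x ^ 2)%N by move: M0; rewrite eM /= -mulnA muln_gt0 => /andP [].
  have eM' : M = (2 * (p * x ^ 2))%N by rewrite eM /=; ring.
  have heq' : (z ^ 2 + M ^ 2 = N ^ 2 + 2 * M * N)%N by rewrite -heq eL /= mul1n.
  have [s [t [hZ hc' cst os]]] := K1 cMN oN eM' c0 heq'.
  have t0 : (0 < t)%N by move: c0; rewrite hc' muln_gt0 => /andP [].
  have hv : (y ^ 2 + 2 * s * t = s ^ 2 + 2 * t ^ 2)%N.
    by move: hZ; rewrite eN eM' hc' /=; clear; lia.
  have [m0 hcub] := S1_step t0 hv hc'.
  apply: (IH (y%:Z + t%:Z - s%:Z) t%:Z) => //.
  - have hy : (y <= y ^ 2)%N by rewrite -{1}(expn1 y) leq_pexp2l // lt0n; apply/eqP => y0;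
      move: N0; rewrite eN y0.
    have ht : (t <= s * t)%N by rewrite leq_pmull // lt0n; apply/eqP => s0; move: os; rewrite s0.
    have s0 : (0 < s)%N by rewrite lt0n; apply/eqP => s0; move: os; rewrite s0.
    move: hB hy ht m0 s0; rewrite eN eM' hc' /=; clear; lia.
  - by rewrite gt_eqF.
case/orP => [/eqP [-> -> ->] eM eN eL|].
  (* S2 : M = 2 x^2, N = p y^2, L = z^2 *)
  have oN : odd N by apply: (odd_of_cop _ cMN); rewrite eM /= dvdn_mulr.
  have c0 : (0 < x ^ 2)%N by move: M0; rewrite eM /= muln_gt0 => /andP [].
  have eM' : M = (2 * x ^ 2)%N by rewrite eM.
  have heq' : (z ^ 2 + M ^ 2 = N ^ 2 + 2 * M * N)%N by rewrite -heq eL /= mul1n.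
  have [s [t [hZ hc' cst os]]] := K1 cMN oN eM' c0 heq'.
  have [h [g [es et ex]]] := sq_split2 cst (esym hc').
  have oy : odd y by move: oN; rewrite eN /= oddM odd_sq => /andP [].
  have oh : odd h by move: os; rewrite es odd_sq.
  have e2 : (p * y ^ 2 + 2 * g ^ 2 * h ^ 2 = h ^ 4 + 2 * g ^ 4)%N.
    by move: hZ; rewrite eN eM' es et ex /=; clear; lia.
  by case: hp8 => hr; [exact: (killS2 chkS2_3 hr oy oh e2) | exact: (killS2 chkS2_5 hr oy oh e2)].
case/orP => [/eqP [-> -> ->] eM eN eL|].
  by case: hp8 => hr; [exact: (kill chk_102_3 hr eM eN eL ocnt heq) | exact: (kill chk_102_5 hr eM eN eL ocnt heq)].
case/orP => [/eqP [-> -> ->] eM eN eL|].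
  by case: hp8 => hr; [exact: (kill chk_210_3 hr eM eN eL ocnt heq) | exact: (kill chk_210_5 hr eM eN eL ocnt heq)].
case/orP => [/eqP [-> -> ->] eM eN eL|].
  by case: hp8 => hr; [exact: (kill chk_030_3 hr eM eN eL ocnt heq) | exact: (kill chk_030_5 hr eM eN eL ocnt heq)].
case/orP => [/eqP [-> -> ->] eM eN eL|].
  by case: hp8 => hr; [exact: (kill chk_012_3 hr eM eN eL ocnt heq) | exact: (kill chk_012_5 hr eM eN eL ocnt heq)].
case/orP => [/eqP [-> -> ->] eM eN eL|].
  (* S5 : M = p x^2, N = y^2, L = 2 z^2 *)
  have oL : odd L = false by rewrite eL /= oddM.
  have oM : odd M by move: ocnt; rewrite oL addn0; case: (odd M); case: (odd N).
  have oN : odd N by move: ocnt; rewrite oL addn0; case: (odd M); case: (odd N).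
  have cNz : coprime N z.
    by apply: (coprime_dvdr _ cNL); rewrite eL /= dvdn_mull // dvdn_exp.
  have heq' : (2 * z ^ 2 + M ^ 2 = N ^ 2 + 2 * M * N)%N by rewrite -heq eL.
  have [s [t [en os hm]]] := K2 oM oN cNz heq'.
  have ox : odd x by move: oM; rewrite eM /= oddM odd_sq => /andP [].
  have e2 : (p * x ^ 2 + 4 * s * t = s ^ 2 + 2 * t ^ 2 \/ p * x ^ 2 = s ^ 2 + 2 * t ^ 2 + 4 * s * t)%N.
    by rewrite -en -[(p * x ^ 2)%N]/(dd p 2 * x ^ 2)%N -eM.
  by case: hp8 => hr; [exact: (killS5 chkS5_3 hr ox os e2) | exact: (killS5 chkS5_5 hr ox os e2)].
case/orP => [/eqP [-> -> ->] eM eN eL|].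
  (* S7 : M = x^2, N = p y^2, L = 2 z^2 *)
  have oL : odd L = false by rewrite eL /= oddM.
  have oM : odd M by move: ocnt; rewrite oL addn0; case: (odd M); case: (odd N).
  have oN : odd N by move: ocnt; rewrite oL addn0; case: (odd M); case: (odd N).
  have cNz : coprime N z.
    by apply: (coprime_dvdr _ cNL); rewrite eL /= dvdn_mull // dvdn_exp.
  have heq' : (2 * z ^ 2 + M ^ 2 = N ^ 2 + 2 * M * N)%N by rewrite -heq eL.
  have [s [t [en os hm]]] := K2 oM oN cNz heq'.
  have ox : odd x by move: oM; rewrite eM /= mul1n odd_sq.
  have oy : odd y by move: oN; rewrite eN /= oddM odd_sq => /andP [].
  have e1 : (p * y ^ 2 = s ^ 2 + 2 * t ^ 2)%N by rewrite -en eN.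
  have e2 : (x ^ 2 + 4 * s * t = s ^ 2 + 2 * t ^ 2 \/ x ^ 2 = s ^ 2 + 2 * t ^ 2 + 4 * s * t)%N.
    by rewrite -en -[(x ^ 2)%N]mul1n -[(1 * x ^ 2)%N]/(dd p 0 * x ^ 2)%N -eM.
  by case: hp8 => hr; [exact: (killS7 chkS7_3 hr ox oy os e1 e2) | exact: (killS7 chkS7_5 hr ox oy os e1 e2)].
move/eqP => [-> -> ->] eM eN eL.
by case: hp8 => hr; [exact: (kill chk_003_3 hr eM eN eL ocnt heq) | exact: (kill chk_003_5 hr eM eN eL ocnt heq)].
Qed.

Lemma no_cub p : prime p -> (p %% 8 = 3 \/ p %% 8 = 5)%N ->
  forall m n : int, m != 0 -> 0 < n -> ~ cub p m n.
Proof.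
move=> pp hp8 m n.
move: {2}(`|m| + `|n|)%N (leqnn (`|m| + `|n|)%N) => B.
elim: B m n => [|B IHB] m n hB m0 n0.
  by exfalso; move/eqP: m0; lia.
have IH : forall m n : int, (`|m| + `|n| < B.+1)%N -> m != 0 -> 0 < n -> ~ cub p m n.
  by move=> m' n' h; apply: IHB; rewrite -ltnS.
case: (ltrgtP m 0) => hm; last by rewrite hm eqxx in m0.
- move=> [k hk].
  have hc : cub p `|n|%N%:Z `|m|%N%:Z.
    exists k; rewrite -hk abszE gtr0_norm // abszE ltr0_norm //; ring.
  apply: (pos_case pp hp8 IH _ _ _ hc); first by rewrite addnC.
  + by rewrite absz_gt0 gt_eqF.
  + by rewrite absz_gt0 lt_eqF.
- move=> hc.
  have hc' : cub p `|m|%N%:Z `|n|%N%:Z by rewrite abszE gtr0_norm // abszE gtr0_norm.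
  apply: (pos_case pp hp8 IH _ _ _ hc') => //.
  + by rewrite absz_gt0 gt_eqF.
  + by rewrite absz_gt0 gt_eqF.
Qed.

Lemma rat_sqr_int (r : rat) (X : int) : r ^+ 2 = X%:~R -> exists k : int, r = k%:~R.
Proof.
move=> hr.
have e : numq r ^+ 2 = X * denq r ^+ 2.
  apply: (@intr_inj rat); rewrite !expr2 !intrM -!expr2 numqE exprMn hr.
  by rewrite mulrC.
have hd : (`|denq r| %| `|numq r| ^ 2)%N.
  by rewrite -abszX e abszM abszX dvdn_mull // dvdn_exp.
have d1 : `|denq r|%N = 1%N.
  apply: (cop_common (coprimeXl 2 (coprime_num_den r))) => //.
have d1' : denq r = 1 by rewrite -absz_denq d1.
by exists (numq r); rewrite numqE d1' mulr1.
Qed.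

Lemma rat_to_cub p : pi4_congruent (2 * p) ->
  exists m n : int, [/\ m != 0, 0 < n & cub p m n].
Proof.
case=> _ [a [b [c [a0 b0 c0 hab hc]]]].
set D := c + a - b.
have key : D ^+ 2 + 2 * b * D - b ^+ 2 = 2 * a * D.
  apply/eqP; rewrite -subr_eq0; apply/eqP.
  transitivity (c ^+ 2 - (a ^+ 2 + 2 * b ^+ 2 - 2 * a * b)); first by rewrite /D; ring.
  by rewrite hc subrr.
have D0 : D != 0.
  apply/eqP => hD; move: key; rewrite hD => h.
  have : b ^+ 2 = 0 by move: h; rewrite expr0n /=; lra.
  by move/eqP; rewrite sqrf_eq0 gt_eqF.
have hab' : a * b = 4 * p%:R by rewrite hab natrM; ring.
set t := b / D.
have e1 : 1 + 2 * t - t ^+ 2 = 2 * a / D.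
  have -> : 1 + 2 * t - t ^+ 2 = (D ^+ 2 + 2 * b * D - b ^+ 2) / D ^+ 2 by rewrite /t; field.
  by rewrite key; field.
have ht : 2 * p%:R * t * (1 + 2 * t - t ^+ 2) = (4 * p%:R / D) ^+ 2.
  rewrite e1 /t.
  transitivity (4 * p%:R * (a * b) / D ^+ 2); first by field.
  by rewrite hab'; field.
set m := numq t; set n := denq t.
have n0 : 0 < n by apply: denq_gt0.
have hm : m%:~R = t * n%:~R :> rat by rewrite numqE.
set X : int := 2 * p%:Z * m * n * (n ^+ 2 + 2 * m * n - m ^+ 2).
have hX : (4 * p%:R * n%:~R ^+ 2 / D) ^+ 2 = X%:~R :> rat.
  rewrite /X !(rmorphB, rmorphD, rmorphM, rmorphXn) /= hm.
  transitivity (n%:~R ^+ 4 * (2 * p%:R * t * (1 + 2 * t - t ^+ 2)) : rat); last first.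
    have e2 : (1%:~R : rat) = 1 by [].
    have ep : ((p%:Z)%:~R : rat) = p%:R by [].
    rewrite e2 ep; ring.
  by rewrite ht; field.
have [k hk] := rat_sqr_int hX.
exists m, n; split => //.
- by rewrite /m numq_eq0 /t mulf_neq0 ?invr_eq0 // gt_eqF.
- exists k; apply: (@intr_inj rat).
  by rewrite -/X -hX hk !expr2 intrM.
Qed.

End RingPart.

Theorem corollary3p3 (p : nat) :
  prime p -> (p %% 8 = 3 \/ p %% 8 = 5)%N -> ~ pi4_congruent (2 * p).
Proof.
move=> pp hp8 /rat_to_cub [m [n [m0 n0 hc]]].
exact: (no_cub pp hp8 m0 n0 hc).
Qed.
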